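(* Let $L\ge 2$, $M=L^2$, and consider square $M$-QAM whose constellation points form an $L\times L$ equally spaced grid, indexed by $(k,k')\in\{0,\dots,L-1\}^2$ (in-phase index $k$, quadrature index $k'$), carrying distinct original symbols $s_{o,k,k'}$. For $s_1=s_{o,k_1,k_1'}$ and $s_2=s_{o,k_2,k_2'}$, the superposed signal (synchronous phase, equal power, no noise) is the point of the superposed constellation with index $(l,l')=(k_1+k_2,\,k_1'+k_2')\in\{0,\dots,2L-2\}^2$. Let $c:\{0,\dots,2L-2\}^2\to\mathcal{S}$ be any map and define $C(s_{o,k_1,k_1'},s_{o,k_2,k_2'})=c(k_1+k_2,k_1'+k_2')$. Then $C$ satisfies the Exclusive Law (for all $s_1'\ne s_1$ and all $s_2$, $C(s_1',s_2)\ne C(s_1,s_2)$; and for all $s_2'\ne s_2$ and all $s_1$, $C(s_1,s_2')\ne C(s_1,s_2)$) if and only if the superposed constellation points in any $L$ by $L$ square are mapped to distinct symbols, i.e. for every $(a,b)\in\{0,\dots,L-1\}^2$ the restriction of $c$ to $\{a,\dots,a+L-1\}\times\{b,\dots,b+L-1\}$ is injective.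
   Context: The Exclusive Law is taken as the necessary and sufficient condition for unique decodability at destinations that know one of the two source symbols and receive the coded symbol $C(s_1,s_2)$ from the relay. *)

(* Defs.v *)
From mathcomp Require Import all_boot.
Set Implicit Arguments. Unset Strict Implicit. Unset Printing Implicit Defensive.

Lemma sup_idx_lt (L : nat) (k1 k2 : 'I_L) : k1 + k2 < (2 * L).-1.
Proof.
case: L k1 k2 => [[]//|L] k1 k2.
have h1 := ltn_ord k1; have h2 := ltn_ord k2.
rewrite mul2n -addnn addSn /=.
by rewrite -addnS leq_add // -ltnS.
Qed.

Definition sup_idx (L : nat) (k1 k2 : 'I_L) : 'I_(2 * L).-1 :=
  Ordinal (sup_idx_lt k1 k2).

(* Original symbols s_{o,k,k'} are identified with their (distinct) indices (k,k'). *)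
Definition qam_sym (L : nat) := ('I_L * 'I_L)%type.

Definition netcode (L : nat) (S : Type) (c : 'I_(2 * L).-1 -> 'I_(2 * L).-1 -> S)
  (s1 s2 : qam_sym L) : S :=
  c (sup_idx s1.1 s2.1) (sup_idx s1.2 s2.2).

Definition exclusive_law (T S : Type) (C : T -> T -> S) : Prop :=
  (forall s1 s1' s2, s1' <> s1 -> C s1' s2 <> C s1 s2) /\
  (forall s1 s2 s2', s2' <> s2 -> C s1 s2' <> C s1 s2).

Definition squares_distinct (L : nat) (S : Type)
  (c : 'I_(2 * L).-1 -> 'I_(2 * L).-1 -> S) : Prop :=
  forall (a b : 'I_L) (l1 l1' l2 l2' : 'I_(2 * L).-1),
    a <= l1 < a + L -> b <= l1' < b + L ->
    a <= l2 < a + L -> b <= l2' < b + L ->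
    c l1 l1' = c l2 l2' -> l1 = l2 /\ l1' = l2'.

(* Main.v *)
Require Import Defs.
From mathcomp Require Import all_boot.
From mathcomp Require Import zify.

Theorem corollary1 (L : nat) (hL : 2 <= L) (S : Type)
  (c : 'I_(2 * L).-1 -> 'I_(2 * L).-1 -> S) :
  exclusive_law (netcode c) <-> squares_distinct c.
Proof.
split.
- move=> [H1 _] a b l1 l1' l2 l2' /andP[h1 h1'] /andP[h2 h2'] /andP[h3 h3'] /andP[h4 h4'] E.
  have p1 : l1 - a < L by lia.
  have p2 : l1' - b < L by lia.
  have p3 : l2 - a < L by lia.
  have p4 : l2' - b < L by lia.
  pose s1 := (Ordinal p1, Ordinal p2).
  pose s1' := (Ordinal p3, Ordinal p4).
  pose s2 := (a, b).
  have e1 : sup_idx s1.1 s2.1 = l1 by apply: val_inj => /=; lia.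
  have e2 : sup_idx s1.2 s2.2 = l1' by apply: val_inj => /=; lia.
  have e3 : sup_idx s1'.1 s2.1 = l2 by apply: val_inj => /=; lia.
  have e4 : sup_idx s1'.2 s2.2 = l2' by apply: val_inj => /=; lia.
  case: (boolP (s1' == s1)) => [/eqP Hs|/eqP Hs].
  + have Ha : l2 - a = l1 - a by move: Hs => [-> _].
    have Hb : l2' - b = l1' - b by move: Hs => [_ ->].
    split; apply: val_inj => /=; lia.
  + exfalso; apply: (H1 s1 s1' s2 Hs).
    by rewrite /netcode e1 e2 e3 e4.
- move=> H; split.
  + move=> [k1 k1'] [j1 j1'] [k2 k2'] Hne E.
    apply: Hne; rewrite /netcode /= in E.
    have o1 := ltn_ord k1; have o2 := ltn_ord k1'; have o3 := ltn_ord j1;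
    have o4 := ltn_ord j1'.
    have HH := @H k2 k2' _ _ _ _ _ _ _ _ E.
    case: HH; try by (rewrite /=; apply/andP; split; lia).
    move=>  /(congr1 val) /= u /(congr1 val) /= v.
    congr pair; apply: val_inj => /=; lia.
  + move=> [k1 k1'] [k2 k2'] [j2 j2'] Hne E.
    apply: Hne; rewrite /netcode /= in E.
    have o1 := ltn_ord k2; have o2 := ltn_ord k2'; have o3 := ltn_ord j2;
    have o4 := ltn_ord j2'.
    have HH := @H k1 k1' _ _ _ _ _ _ _ _ E.
    case: HH; try by (rewrite /=; apply/andP; split; lia).
    move=>  /(congr1 val) /= u /(congr1 val) /= v.
    congr pair; apply: val_inj => /=; lia.
Qed.
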